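(* Let $n\geq 1$. No automorphism of a thick building of type $\mathsf{A}_n\times\mathsf{A}_n$ that interchanges the two components and acts as an involution on the type set is domestic.
   Context: A building of type $\mathsf{A}_n\times\mathsf{A}_n$ is a product of two buildings of type $\mathsf{A}_n$; its type set is the disjoint union of the two type sets, and an automorphism is a simplicial automorphism, inducing a permutation of the type set. Chambers are opposite if they are at maximal gallery distance; an automorphism is domestic if it maps no chamber to an opposite chamber. *)

(* Defs.v *)
(* Buildings are given via the W-metric (Weyl distance)
   approach of Abramenko--Brown, "Buildings", Ch. 5. *)
From HB Require Import structures.
From mathcomp Require Import all_boot all_order all_fingroup.
From mathcomp Require Import gproduct.
Set Implicit Arguments.
Unset Strict Implicit.
Unset Printing Implicit Defensive.
Import GroupScope.

Section Coxeter.
Variables (gT : finGroupType) (S : {set gT}).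

Definition wordb (w : gT) (k : nat) : bool :=
  [exists t : k.-tuple gT, all (mem S) t && (\prod_(x <- t) x == w)].

Definition wlen (w : gT) : nat := find (wordb w) (iota 0 #|gT|.+1).

Definition is_building (Ch : Type) (delta : Ch -> Ch -> gT) : Prop :=
  [/\ inhabited Ch,
      (forall C D, delta C D = 1 <-> C = D),
      (forall C D C' s, s \in S -> delta C' C = s ->
          (delta C' D = s * delta C D \/ delta C' D = delta C D) /\
          (wlen (s * delta C D) = (wlen (delta C D)).+1 ->
             delta C' D = s * delta C D)) &
      (forall C D s, s \in S ->
          exists C', delta C' C = s /\ delta C' D = s * delta C D)].

(* thickness: every panel contains at least three chambers *)
Definition thick (Ch : Type) (delta : Ch -> Ch -> gT) : Prop :=
  forall C s, s \in S -> exists D1 D2,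
    [/\ delta C D1 = s, delta C D2 = s & D1 <> D2].

Variables (Ch : Type) (delta : Ch -> Ch -> gT).

Definition adjacent (C D : Ch) : Prop := delta C D \in S.

Definition gallery (k : nat) (C D : Ch) : Prop :=
  exists f : nat -> Ch, [/\ f 0 = C, f k = D &
    forall i, i < k -> adjacent (f i) (f i.+1)].

Definition gallery_dist (C D : Ch) (k : nat) : Prop :=
  gallery k C D /\ forall k', gallery k' C D -> k <= k'.

Definition opposite (C D : Ch) : Prop :=
  exists k, gallery_dist C D k /\
    forall X Y k', gallery_dist X Y k' -> k' <= k.

Definition is_automorphism (phi : Ch -> Ch) (tau : gT -> gT) : Prop :=
  [/\ bijective phi,
      {in S, forall s, tau s \in S},
      {in S &, injective tau} &
      forall C D s, s \in S -> (delta C D = s <-> delta (phi C) (phi D) = tau s)].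

Definition domestic (phi : Ch -> Ch) : Prop := forall C, ~ opposite C (phi C).

End Coxeter.

(* The Coxeter system of type A_n x A_n: W = Sym(n+1) x Sym(n+1) *)
Definition WAA (n : nat) : finGroupType := ('S_n.+1 * 'S_n.+1)%type.

(* simple reflection (i, i+1) in Sym(n+1), for i < n *)
Definition sref (n : nat) (i : 'I_n) : 'S_n.+1 :=
  tperm (widen_ord (leqnSn n) i) (lift ord0 i).

Definition S1 (n : nat) : {set WAA n} := [set ((sref i, 1) : WAA n) | i : 'I_n].
Definition S2 (n : nat) : {set WAA n} := [set ((1, sref i) : WAA n) | i : 'I_n].
Definition SAA (n : nat) : {set WAA n} := S1 n :|: S2 n.

(* Main.v *)
Require Import Defs.
From HB Require Import structures.
From mathcomp Require Import all_boot all_order all_fingroup.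
From mathcomp Require Import gproduct.
From mathcomp Require Import zify.
From Stdlib Require Import Classical.
Set Implicit Arguments.
Unset Strict Implicit.
Unset Printing Implicit Defensive.

Section Part0.
Local Open Scope group_scope.

Lemma find_iota0 (P : pred nat) k N : k < N -> P k ->
  (forall j, j < k -> ~~ P j) -> find P (iota 0 N) = k.
Proof.
move=> kN Pk H; rewrite -(subnKC (ltnW kN)) iotaD find_cat.
have -> : has P (iota 0 k) = false.
  by apply/hasPn => j; rewrite mem_iota => /andP[_ jk]; exact: H.
rewrite size_iota add0n.
have -> : N - k = (N - k).-1.+1 by rewrite prednK // subn_gt0.
by rewrite /= Pk addn0.
Qed.


Lemma ex_max_fun (T : Type) (g : T -> nat) B : inhabited T ->
  (forall x, g x <= B) -> exists x0, forall x, g x <= g x0.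
Proof.
move=> [x1] hB; apply: NNPP => H.
have H' : forall x0, exists x, g x0 < g x.
  move=> x0; apply: NNPP => H2; apply: H; exists x0 => x.
  by rewrite leqNgt; apply/negP => h; apply: H2; exists x.
suff : forall k, exists x, k <= g x.
  by move/(_ B.+1) => [x]; rewrite leqNgt ltnS hB.
elim => [|k [x hx]]; first by exists x1.
by have [y hy] := H' x; exists y; apply: leq_ltn_trans hy.
Qed.

Section Gen.
Variables (gT : finGroupType) (S : {set gT}) (f : gT -> nat).
Hypotheses (Sinv : {in S, forall s, s * s = 1})
  (fpm : {in S, forall s w, f (s * w) = (f w).+1 \/ (f (s * w)).+1 = f w})
  (fdesc : forall w : gT, w != 1 -> exists2 s, s \in S & (f (s * w)).+1 = f w)
  (f1 : f 1 = 0).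

Lemma f_word (s : seq gT) : all (mem S) s -> f (\prod_(x <- s) x) <= size s.
Proof.
elim: s => [|x s IH] /=; first by rewrite big_nil f1.
case/andP => xS sS; rewrite big_cons.
move: (IH sS); set P := \prod_(x <- s) x; change (f P <= size s -> f (x * P) <= (size s).+1).
case: (fpm xS P) => h /=; lia.
Qed.

Lemma f_exword w : exists s : seq gT,
  [/\ all (mem S) s, size s = f w & \prod_(x <- s) x = w].
Proof.
move: {2}(f w) (erefl (f w)) => k; elim: k w => [|k IH] w fw.
  have w1 : w = 1.
    apply/eqP; apply/negPn/negP => /fdesc [s _]; by rewrite fw.
  by exists [::]; rewrite w1 big_nil.
have w1 : w != 1 by apply/negP => /eqP w1; move: fw; rewrite w1 f1.
have [s sS hs] := fdesc w1.
have [t [tS st pt]] := IH (s * w) ltac:(lia).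
exists (s :: t); split => //=; first by rewrite sS.
  by rewrite st -hs.
by rewrite big_cons pt mulgA Sinv // mul1g.
Qed.

Lemma f_attain w k : k <= f w -> exists u, f u = k.
Proof.
move: {2}(f w) (erefl (f w)) => n; elim: n w k => [|n IH] w k fw kn.
  by exists w; lia.
have w1 : w != 1 by apply/negP => /eqP w1; move: fw; rewrite w1 f1.
have [s sS hs] := fdesc w1.
have [->|kn'] := eqVneq k n.+1; first by exists w.
apply: (IH (s * w)); lia.
Qed.

Lemma f_bound w : f w < #|gT|.
Proof.
have : (f w).+1 <= size (map f (enum gT)).
  rewrite -(size_iota 0 (f w).+1); apply: uniq_leq_size; first exact: iota_uniq.
  move=> j; rewrite mem_iota add0n => /andP[_ jw].
  have [u <-] := f_attain (w := w) (k := j) ltac:(lia).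
  by apply: map_f; rewrite mem_enum.
by rewrite size_map -cardT.
Qed.

Lemma wlenE w : wlen S w = f w.
Proof.
rewrite /wlen; apply: find_iota0.
- have := f_bound w; lia.
- have [s [sS ss ps]] := f_exword w.
  apply/existsP; exists (Tuple (introT eqP ss)); rewrite /= sS ps eqxx //.
- move=> j jw; apply/negP => /existsP [t /andP [tS /eqP pt]].
  have := f_word tS; rewrite pt size_tuple; lia.
Qed.

Lemma invS s : s \in S -> s^-1 = s.
Proof. by move=> sS; apply/eqP; rewrite eq_invg_mul Sinv. Qed.

Lemma prod_rev (s : seq gT) : all (mem S) s ->
  \prod_(x <- rev s) x = (\prod_(x <- s) x)^-1.
Proof.
elim: s => [|x s IH] /=; first by rewrite big_nil invg1.
case/andP => xS sS; rewrite rev_cons -cats1 big_cat big_seq1 /= IH //.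
by rewrite big_cons invMg [x^-1]invS.
Qed.


Lemma fV w : f w^-1 = f w.
Proof.
suff H : forall w, f w^-1 <= f w by apply/eqP; rewrite eqn_leq H /= -{1}(invgK w) H.
move=> v; have [s [sS ss ps]] := f_exword v.
have := f_word (s := rev s); rewrite all_rev sS prod_rev // ps size_rev ss.
by apply.
Qed.

Lemma fpmR t w : t \in S -> f (w * t) = (f w).+1 \/ (f (w * t)).+1 = f w.
Proof.
move=> tS; rewrite -fV invMg invS // -(fV w); exact: fpm.
Qed.


Hypothesis S1 : 1 \notin S.
Variables (Ch : Type) (delta : Ch -> Ch -> gT).
Hypotheses (WD1 : forall C D, delta C D = 1 <-> C = D)
  (WD2 : forall C D C' s, s \in S -> delta C' C = s ->
          (delta C' D = s * delta C D \/ delta C' D = delta C D) /\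
          (f (s * delta C D) = (f (delta C D)).+1 ->
             delta C' D = s * delta C D))
  (WD3 : forall C D s, s \in S ->
          exists C', delta C' C = s /\ delta C' D = s * delta C D).

Lemma dd C : delta C C = 1.
Proof. by apply/WD1. Qed.

Lemma f0 w : f w = 0 -> w = 1.
Proof.
move=> fw; apply/eqP; apply/negPn/negP => /fdesc [s _]; by rewrite fw.
Qed.

Lemma Sn1 s : s \in S -> s != 1.
Proof. by move=> sS; apply/negP => /eqP e; move: S1; rewrite -e sS. Qed.

Lemma adjsym C C' s : s \in S -> delta C' C = s -> delta C C' = s.
Proof.
move=> sS h; have [[e|e] _] := @WD2 C C' C' s sS h; rewrite dd in e.
  by rewrite -[delta C C']mul1g -(Sinv sS) -mulgA -e mulg1.
have CC' : C = C' by apply/WD1.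
by move: h; rewrite CC' dd => e1; move: (Sn1 sS); rewrite -e1 eqxx.
Qed.

Lemma panel_trans X Y Z s : s \in S -> delta X Y = s -> delta Y Z = s ->
  X <> Z -> delta X Z = s.
Proof.
move=> sS h1 h2 XZ; have [[e|e] _] := @WD2 Y Z X s sS h1; rewrite h2 in e => //.
by rewrite Sinv // in e; have := proj1 (WD1 X Z) e.
Qed.

Lemma RP C D E t : t \in S -> delta D E = t ->
  f (delta C D * t) = (f (delta C D)).+1 -> delta C E = delta C D * t.
Proof.
move=> tS hDE; move: {2}(f (delta C D)) (erefl (f (delta C D))) => k.
elim: k C => [|k IH] C fk hf.
  have CD : C = D by apply/WD1; exact: f0.
  by rewrite CD dd mul1g.
set u := delta C D in fk hf *.
have u1 : u != 1 by apply/negP => /eqP e; move: fk; rewrite e f1.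
have [s sS hs] := fdesc u1.
have [C' [h1 h2]] := @WD3 C D s sS.
have fsut : f (s * u * t) = (f (s * u)).+1.
  have e : s * (u * t) = s * u * t by rewrite mulgA.
  have := fpmR (s * u) tS; have := fpm sS (u * t).
  rewrite e hf; move=> a b; lia.
rewrite -/u in h2.
have hk : f (delta C' D) = k by rewrite h2; lia.
have IH' := IH C' hk ltac:(by rewrite h2).
rewrite h2 in IH'.
have hCC' := adjsym sS h1.
have [_ P2] := @WD2 C' E C s sS hCC'.
have e : s * (s * u * t) = u * t by rewrite !mulgA Sinv // mul1g.
rewrite IH' e in P2; apply: P2; by rewrite fsut hf hs.
Qed.


Lemma dsym C D : delta D C = (delta C D)^-1.
Proof.
move: {2}(f (delta C D)) (erefl (f (delta C D))) => k.
elim: k C => [|k IH] C fk.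
  have CD : C = D by apply/WD1; exact: f0.
  by rewrite CD dd invg1.
set w := delta C D in fk *.
have w1 : w != 1 by apply/negP => /eqP e; move: fk; rewrite e f1.
have [s sS hs] := fdesc w1.
have [C' [h1 h2]] := @WD3 C D s sS.
rewrite -/w in h2.
have hk : f (delta C' D) = k by rewrite h2; lia.
have IH' := IH C' hk; rewrite h2 in IH'.
have e : (s * w)^-1 * s = w^-1.
  by rewrite invMg [s^-1]invS // -mulgA Sinv // mulg1.
rewrite -e -IH'; apply: (@RP D C' C s sS h1).
by rewrite IH' e fV fV hs.
Qed.

Lemma RP1 C D E t : t \in S -> delta D E = t ->
  delta C E = delta C D * t \/ delta C E = delta C D.
Proof.
move=> tS h; have h' := adjsym tS h.
have [[e|e] _] := @WD2 D C E t tS h'; rewrite !(dsym C) in e.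
  left; rewrite -[delta C E]invgK e invMg invgK invS //.
right; by rewrite -[delta C E]invgK e invgK.
Qed.

Lemma G1 k (g : nat -> Ch) : (forall i, i < k -> adjacent S delta (g i) (g i.+1)) ->
  f (delta (g 0) (g k)) <= k.
Proof.
elim: k g => [|k IH] g hg; first by rewrite dd f1.
have := IH (fun i => g i.+1) (fun i ik => hg i.+1 ik).
have := hg 0 isT; rewrite /adjacent => sS.
have [[e|e] _] := @WD2 (g 1%N) (g k.+1) (g 0) _ sS (erefl _).
  rewrite e; case: (fpm sS (delta (g 1%N) (g k.+1))) => [->|<-] //=.
  by move/ltnW/leqW.
by rewrite e => /leq_trans; apply.
Qed.

Lemma G2 X Y : gallery S delta (f (delta X Y)) X Y.
Proof.
move: {2}(f (delta X Y)) (erefl (f (delta X Y))) => k.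
elim: k X => [|k IH] X fk; rewrite fk.
  have XY : X = Y by apply/WD1; exact: f0.
  by rewrite -XY; exists (fun _ => X); split.
set w := delta X Y in fk *.
have w1 : w != 1 by apply/negP => /eqP e; move: fk; rewrite e f1.
have [s sS hs] := fdesc w1.
have [C' [h1 h2]] := @WD3 X Y s sS.
rewrite -/w in h2.
have hk : f (delta C' Y) = k by rewrite h2; lia.
have [g [g0 gk ga]] := IH C' hk.
rewrite hk in g0 gk ga.
exists (fun i => if i is j.+1 then g j else X); split => //.
case => [|i] ik /=.
  by rewrite /adjacent g0 (adjsym sS h1).
exact: ga.
Qed.

Lemma gdist X Y k : gallery_dist S delta X Y k -> k = f (delta X Y).
Proof.
case=> [[g [g0 gk ga]] H].
have := G1 ga; rewrite g0 gk => a.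
have := H _ (G2 X Y) => b; apply/eqP; rewrite eqn_leq a b.
done.
Qed.

Lemma opp_of C D : (forall X Y, f (delta X Y) <= f (delta C D)) ->
  opposite S delta C D.
Proof.
move=> H; exists (f (delta C D)); split.
  split; first exact: G2.
  move=> k' [g [g0 gk ga]]; have := G1 ga; by rewrite g0 gk.
move=> X Y k' /gdist ->; exact: H.
Qed.


Lemma main_gen (phi : Ch -> Ch) (tau : gT -> gT)
  (haut : is_automorphism S delta phi tau) (hthick : thick S delta)
  (hsw : forall s w, s \in S -> s * w != w * tau s)
  (hmax : forall w, (forall s, s \in S -> (f (s * w)).+1 = f w) -> forall u, f u <= f w)
  (inh : inhabited Ch) : ~ domestic S delta phi.
Proof.
case: haut => _ tauS _ hphi.
have [C0 HC0] := @ex_max_fun Ch (fun C => f (delta C (phi C))) #|gT| inh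
  (fun C => ltnW (f_bound _)).
move=> /(_ C0); apply; apply: opp_of.
set w := delta C0 (phi C0) in HC0 *.
suff H : forall s, s \in S -> (f (s * w)).+1 = f w.
  by move=> X Y; apply: hmax.
move=> s sS; case: (fpm sS w) => // hsw1; exfalso.
have tS := tauS s sS; set t := tau s in tS.
have [D1 [D2 [e1 e2 D12]]] := hthick C0 s sS.
have key : forall X, delta C0 X = s -> delta X (phi X) = s * w * t.
  move=> X hX; have hX' := adjsym sS hX.
  have hA : delta X (phi C0) = s * w.
    by apply: (proj2 (@WD2 C0 (phi C0) X s sS hX')).
  have hp : delta (phi X) (phi C0) = t by apply/(hphi _ _ _ sS).
  have hp' := adjsym tS hp.
  case: (@RP1 X (phi C0) (phi X) t tS hp'); rewrite hA // => e.
  by have := HC0 X; rewrite /= e -/w hsw1 ltnn.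
have k1 := key _ e1; have k2 := key _ e2.
have h12 : delta D1 D2 = s.
  by apply: (panel_trans sS (adjsym sS e1) e2 D12).
have hp12 : delta (phi D1) (phi D2) = t by apply/(hphi _ _ _ sS).
have fswt : f (s * w * t) <= f w by have := HC0 D1; rewrite /= k1.
have fswt' : (f (s * w * t)).+1 = f (s * w).
  case: (fpmR (s * w) tS) => // h; move: fswt; rewrite h hsw1; lia.
have r1 : delta D1 (phi D2) = s * w.
  have e : s * w * t * t = s * w by rewrite -mulgA Sinv // mulg1.
  rewrite -e -k1; apply: (@RP D1 (phi D1) (phi D2) t tS hp12); by rewrite k1 e fswt'.
have [[r2|r2] _] := @WD2 D2 (phi D2) D1 s sS h12.
  move: r2; rewrite r1 k2 !mulgA Sinv // mul1g => /eqP; by rewrite (negbTE (hsw s w sS)).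
move: r2; rewrite r1 k2 => /eqP; rewrite -{1}(mulg1 (s * w)) => /eqP /mulgI e.
by move: (Sn1 tS); rewrite -e eqxx.
Qed.

End Gen.

End Part0.

Section Part1.
Local Open Scope group_scope.

Definition pinv m (sg : 'S_m) :=
  #|[set p : 'I_m * 'I_m | (p.1 < p.2) && (sg p.2 < sg p.1)]|.

Lemma pinv1 m : pinv (1 : 'S_m) = 0.
Proof.
apply/eqP; rewrite cards_eq0; apply/eqP/setP => p; rewrite !inE !perm1.
by apply/negP => /andP [h1 h2]; move: (ltn_trans h1 h2); rewrite ltnn.
Qed.

Section Sref.
Variables (n : nat) (i : 'I_n).
Let a : 'I_n.+1 := widen_ord (leqnSn n) i.
Let b : 'I_n.+1 := lift ord0 i.

Lemma va : val a = val i. Proof. by []. Qed.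
Lemma vb : val b = (val i).+1. Proof. by rewrite /= /bump leq0n. Qed.

Lemma sref_val x : nat_of_ord (sref i x) =
  if x == a then (val i).+1 else if x == b then val i else val x.
Proof.
rewrite /sref; case: tpermP => [->|->|/eqP xa /eqP xb].
- by rewrite eqxx.
- have -> : (b == a) = false by apply/eqP => /(congr1 val); rewrite va vb; lia.
  by rewrite eqxx.
- by rewrite (negbTE xa) (negbTE xb).
Qed.

Lemma sref_lt x y : ~~ ((x == a) && (y == b)) -> ~~ ((x == b) && (y == a)) ->
  (sref i x < sref i y) = (x < y).
Proof.
move=> h1 h2; rewrite !sref_val.
have ea : forall z : 'I_n.+1, (z == a) = (val z == val i) by move=> z; rewrite -va.
have eb : forall z : 'I_n.+1, (z == b) = (val z == (val i).+1) by move=> z; rewrite -vb.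
move: h1 h2; rewrite !ea !eb.
case: (val x =P val i); case: (val y =P val i); case: (val x =P (val i).+1);
  case: (val y =P (val i).+1) => /= *; lia.
Qed.


Lemma srefa : sref i a = b. Proof. exact: tpermL. Qed.
Lemma srefb : sref i b = a. Proof. exact: tpermR. Qed.
Lemma ab_lt : a < b. Proof. by rewrite va vb. Qed.
Lemma ab_neq : (a == b) = false.
Proof. by apply/negP => /eqP /(congr1 val); rewrite va vb; lia. Qed.

Lemma pinv_sref (sg : 'S_n.+1) :
  pinv (sref i * sg) + (sg b < sg a) = pinv sg + (sg a < sg b).
Proof.
rewrite /pinv.
set X := [set p : 'I_n.+1 * 'I_n.+1 | _].
set Y := [set p : 'I_n.+1 * 'I_n.+1 | _].
pose h := fun p : 'I_n.+1 * 'I_n.+1 => (sref i p.1, sref i p.2).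
have hinj : injective h.
  move=> [x1 x2] [y1 y2] /= [e1 e2]; by rewrite (perm_inj e1) (perm_inj e2).
rewrite -(card_preimset Y hinj).
set Y' := h @^-1: Y.
rewrite (cardsD1 (a, b) X) (cardsD1 (b, a) (X :\ (a, b))).
rewrite (cardsD1 (a, b) Y') (cardsD1 (b, a) (Y' :\ (a, b))).
have -> : X :\ (a, b) :\ (b, a) = Y' :\ (a, b) :\ (b, a).
  apply/setP => [[x y]]; rewrite !inE /= !xpair_eqE.
  case: (boolP ((x == a) && (y == b))) => h1 /=; first by rewrite andbF.
  case: (boolP ((x == b) && (y == a))) => h2 //=.
  by rewrite !permM (sref_lt h1 h2).
rewrite !inE !xpair_eqE !permM srefa srefb [b == a]eq_sym ab_neq /=.
have h1 : (i < bump 0 i) = true by rewrite /bump leq0n; lia.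
have h2 : (bump 0 i < i) = false by rewrite /bump leq0n; lia.
rewrite h1 h2 /= srefa srefb h1 h2 /=.
move: #|_| => K; case: (sg a < sg b); case: (sg b < sg a) => /=; lia.
Qed.

End Sref.

Lemma incr_id m (g : nat -> nat) : (forall i, i.+1 < m -> g i < g i.+1) ->
  (forall i, i < m -> g i < m) -> forall i, i < m -> g i = i.
Proof.
move=> H B.
have lo : forall i, i < m -> i <= g i.
  elim => [|i IH] // hi; have := H i hi; have := IH (ltnW hi); lia.
have up : forall k i, i + k < m -> g i + k <= g (i + k).
  elim => [|k IH] i hik; first by rewrite !addn0.
  have := IH i ltac:(lia); have := H (i + k) ltac:(lia); rewrite !addnS; lia.
move=> i hi; have := up (m.-1 - i) i ltac:(lia).
have -> : i + (m.-1 - i) = m.-1 by lia.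
have := B m.-1 ltac:(lia); have := lo i hi; lia.
Qed.

Lemma perm_incr n (sg : 'S_n.+1) :
  (forall j : 'I_n, sg (widen_ord (leqnSn n) j) < sg (lift ord0 j)) -> sg = 1.
Proof.
move=> H; pose g k := nat_of_ord (sg (inord k)).
have hg : forall k, k < n.+1 -> g k = k.
  apply: incr_id => [k hk|k hk]; last exact: ltn_ord.
  have kn : k < n by lia.
  have := H (Ordinal kn); rewrite /g.
  have -> : widen_ord (leqnSn n) (Ordinal kn) = inord k.
    by apply: val_inj; rewrite /= inordK //; lia.
  have -> : lift ord0 (Ordinal kn) = inord k.+1.
    by apply: val_inj; rewrite /= inordK // /bump leq0n; lia.
  done.
apply/permP => x; rewrite perm1; apply: val_inj => /=.
by have := hg x (ltn_ord x); rewrite /g inord_val.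
Qed.

Lemma perm_decr n (sg : 'S_n.+1) :
  (forall j : 'I_n, sg (lift ord0 j) < sg (widen_ord (leqnSn n) j)) ->
  forall x y : 'I_n.+1, x < y -> sg y < sg x.
Proof.
move=> H; pose g k := n - nat_of_ord (sg (inord k)).
have hg : forall k, k < n.+1 -> g k = k.
  apply: incr_id => [k hk|k hk]; last by rewrite /g; lia.
  have kn : k < n by lia.
  have := H (Ordinal kn); rewrite /g.
  have -> : widen_ord (leqnSn n) (Ordinal kn) = inord k.
    by apply: val_inj; rewrite /= inordK //; lia.
  have -> : lift ord0 (Ordinal kn) = inord k.+1.
    by apply: val_inj; rewrite /= inordK // /bump leq0n; lia.
  have := ltn_ord (sg (inord k)); have := ltn_ord (sg (inord k.+1)); lia.
move=> x y xy; have := hg x (ltn_ord x); have := hg y (ltn_ord y).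
rewrite /g !inord_val; have := ltn_ord (sg x); have := ltn_ord (sg y); lia.
Qed.

End Part1.

Section Part2.
Local Open Scope group_scope.

Section AA.
Variable n : nat.

Definition fAA (w : WAA n) := pinv w.1 + pinv w.2.

Lemma mulAA (x y : WAA n) : x * y = (x.1 * y.1, x.2 * y.2).
Proof. by []. Qed.

Lemma oneAA : (1 : WAA n) = (1, 1).
Proof. by []. Qed.

Lemma sref_neq1 (i : 'I_n) : sref i != 1.
Proof.
apply/eqP => /permP /(_ (widen_ord (leqnSn n) i)); rewrite perm1.
move/(congr1 (@nat_of_ord _)); rewrite sref_val eqxx /=; lia.
Qed.

Lemma SAAP (s : WAA n) : s \in SAA n ->
  (exists i, s = (sref i, 1)) \/ (exists i, s = (1, sref i)).
Proof.
by rewrite /SAA inE => /orP [/imsetP [i _ ->]|/imsetP [i _ ->]]; [left|right]; exists i.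
Qed.

Lemma SinvAA : {in SAA n, forall s, s * s = 1}.
Proof.
move=> s /SAAP [[i ->]|[i ->]]; rewrite mulAA /= tperm2 mulg1 //.
Qed.

Lemma S1AA : (1 : WAA n) \notin SAA n.
Proof.
apply/negP => /SAAP [[i e]|[i e]]; move: e; rewrite oneAA.
  by move/(congr1 fst) => /= e; move: (sref_neq1 i); rewrite -e eqxx.
by move/(congr1 snd) => /= e; move: (sref_neq1 i); rewrite -e eqxx.
Qed.

Lemma pm_sref (i : 'I_n) (sg : 'S_n.+1) :
  pinv (sref i * sg) = (pinv sg).+1 \/ (pinv (sref i * sg)).+1 = pinv sg.
Proof.
have := pinv_sref i sg.
set a := widen_ord _ i; set b := lift ord0 i.
have ab : sg a != sg b.
  apply/negP => /eqP /perm_inj /(congr1 (@nat_of_ord _)); rewrite /= /bump leq0n; lia.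
case: (ltngtP (sg a) (sg b)) => h; last by move: ab => /eqP []; apply: val_inj.
  by move=> /= e; left; lia.
by move=> /= e; right; lia.
Qed.

Lemma pm_up (i : 'I_n) (sg : 'S_n.+1) :
  sg (widen_ord (leqnSn n) i) < sg (lift ord0 i) -> pinv (sref i * sg) = (pinv sg).+1.
Proof.
move=> h; have := pinv_sref i sg.
have h' : (sg (lift ord0 i) < sg (widen_ord (leqnSn n) i)) = false
  by apply/negbTE; rewrite -leqNgt ltnW.
by rewrite h h' /= addn0 addn1.
Qed.

Lemma fpmAA : {in SAA n, forall s w, fAA (s * w) = (fAA w).+1 \/ (fAA (s * w)).+1 = fAA w}.
Proof.
move=> s /SAAP [[i ->]|[i ->]] [w1 w2]; rewrite /fAA mulAA /= mul1g.
  by case: (pm_sref i w1) => e; [left; rewrite e addSn | right; rewrite -e addSn].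
by case: (pm_sref i w2) => e; [left; rewrite e addnS | right; rewrite -e addnS].
Qed.

Lemma f1AA : fAA 1 = 0.
Proof. by rewrite /fAA oneAA /= !pinv1. Qed.

Lemma desc_perm (sg : 'S_n.+1) : sg != 1 ->
  exists i, (pinv (sref i * sg)).+1 = pinv sg.
Proof.
move=> sg1.
have : ~ (forall j : 'I_n, sg (widen_ord (leqnSn n) j) < sg (lift ord0 j)).
  by move/perm_incr => e; move: sg1; rewrite e eqxx.
move/not_all_ex_not => [j hj]; exists j.
have := pinv_sref j sg.
set a := widen_ord _ j; set b := lift ord0 j.
have ab : sg a != sg b.
  apply/negP => /eqP /perm_inj /(congr1 (@nat_of_ord _)); rewrite /= /bump leq0n; lia.
case: (ltngtP (sg a) (sg b)) => h; last by move: ab => /eqP []; apply: val_inj.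
  by [].
by move=> /= e; lia.
Qed.

Lemma fdescAA : forall w : WAA n, w != 1 ->
  exists2 s, s \in SAA n & (fAA (s * w)).+1 = fAA w.
Proof.
move=> [w1 w2] w1n.
have : (w1 != 1) || (w2 != 1).
  case: (eqVneq w1 1) => [e1|n1]; last by apply/orP; left.
  case: (eqVneq w2 1) => [e2|n2]; last by apply/orP; right.
  by move: w1n; rewrite e1 e2 oneAA eqxx.
case/orP => [/desc_perm [i hi]|/desc_perm [i hi]].
  exists (sref i, 1); first by rewrite /SAA inE; apply/orP; left; apply/imsetP; exists i.
  by rewrite /fAA mulAA /= mul1g -hi addSn.
exists (1, sref i); first by rewrite /SAA inE; apply/orP; right; apply/imsetP; exists i.
by rewrite /fAA mulAA /= mul1g -hi addnS.
Qed.

Lemma hmaxAA (w : WAA n) : (forall s, s \in SAA n -> (fAA (s * w)).+1 = fAA w) ->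
  forall u, fAA u <= fAA w.
Proof.
case: w => [w1 w2] H [u1 u2].
have d1 : forall j : 'I_n, w1 (lift ord0 j) < w1 (widen_ord (leqnSn n) j).
  move=> j; have := H (sref j, 1).
  rewrite /SAA inE imset_f //= => /(_ isT); rewrite /fAA mulAA /= mul1g.
  rewrite -addSn => /eqP; rewrite eqn_add2r => /eqP e'.
  have e : (pinv (sref j * w1)).+1 = pinv w1 by [].
  set a := widen_ord _ j; set b := lift ord0 j.
  case: (ltngtP (w1 a) (w1 b)) => h //.
    by move: e; rewrite (pm_up h); lia.
  have : a != b by apply/negP => /eqP /(congr1 (@nat_of_ord _)); rewrite /= /bump leq0n; lia.
  move/eqP => nab; exfalso; apply: nab; apply: (@perm_inj _ w1); exact: val_inj.
have d2 : forall j : 'I_n, w2 (lift ord0 j) < w2 (widen_ord (leqnSn n) j).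
  move=> j; have := H (1, sref j).
  rewrite /SAA inE imset_f ?orbT //= => /(_ isT); rewrite /fAA mulAA /= mul1g.
  rewrite -addnS => /eqP; rewrite eqn_add2l => /eqP e'.
  have e : (pinv (sref j * w2)).+1 = pinv w2 by [].
  set a := widen_ord _ j; set b := lift ord0 j.
  case: (ltngtP (w2 a) (w2 b)) => h //.
    by move: e; rewrite (pm_up h); lia.
  have : a != b by apply/negP => /eqP /(congr1 (@nat_of_ord _)); rewrite /= /bump leq0n; lia.
  move/eqP => nab; exfalso; apply: nab; apply: (@perm_inj _ w2); exact: val_inj.
have le : forall (v u : 'S_n.+1), (forall x y : 'I_n.+1, x < y -> v y < v x) ->
    pinv u <= pinv v.
  move=> v u hv; apply: subset_leq_card; apply/subsetP => p; rewrite !inE.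
  by case/andP => h _; rewrite h hv.
rewrite /fAA /=; apply: leq_add; apply: le; exact: perm_decr.
Qed.

Lemma hswAA (tau : WAA n -> WAA n)
  (hswap : {in S1 n, forall s, tau s \in S2 n} /\ {in S2 n, forall s, tau s \in S1 n}) :
  forall s w, s \in SAA n -> s * w != w * tau s.
Proof.
case: hswap => h1 h2 s [w1 w2]; rewrite /SAA inE => /orP [sS|sS].
  have := h1 _ sS; move: sS => /imsetP [i _ ->] /imsetP [j _ ->].
  rewrite !mulAA /=; apply/negP => /eqP /(congr1 fst) /= e.
  have : sref i * w1 = 1 * w1 by rewrite mul1g; exact: (etrans e (mulg1 _)).
  by move/mulIg => e1; move: (sref_neq1 i); rewrite e1 eqxx.
have := h2 _ sS; move: sS => /imsetP [i _ ->] /imsetP [j _ ->].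
rewrite !mulAA /=; apply/negP => /eqP /(congr1 snd) /= e.
have : sref i * w2 = 1 * w2 by rewrite mul1g; exact: (etrans e (mulg1 _)).
by move/mulIg => e1; move: (sref_neq1 i); rewrite e1 eqxx.
Qed.


End AA.

End Part2.

Unset Implicit Arguments.

Theorem lemma3p7 (n : nat) (hn : 1 <= n)
  (Ch : Type) (delta : Ch -> Ch -> WAA n)
  (hB : is_building (SAA n) delta) (hthick : thick (SAA n) delta)
  (phi : Ch -> Ch) (tau : WAA n -> WAA n)
  (haut : is_automorphism (SAA n) delta phi tau)
  (hswap : {in S1 n, forall s, tau s \in S2 n} /\ {in S2 n, forall s, tau s \in S1 n})
  (hinv : {in SAA n, forall s, tau (tau s) = s}) :
  ~ domestic (SAA n) delta phi.
Proof.
case: hB => inh WD1 WD2 WD3.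
have wE := wlenE (@SinvAA n) (@fpmAA n) (@fdescAA n) (@f1AA n).
apply: (@main_gen _ _ (@fAA n) (@SinvAA n) (@fpmAA n) (@fdescAA n) (@f1AA n) (@S1AA n)
  Ch delta WD1 _ WD3 phi tau haut hthick (hswAA hswap) (@hmaxAA n) inh).
move=> C D C' s sS h; rewrite -!wE; exact: WD2.
Qed.
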